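(* Let $L$ be an even hyperbolic lattice with fixed positive cone $\mathcal{P}_L$, let $G$ be a subgroup of $\mathrm{O}^+(L)$ of finite index, and let $\mathcal{V}\subset\mathcal{N}_L\cap L^\vee$ satisfy (V1)–(V4) below. Let $f\in\overline{\mathcal{P}}_L\cap L$ be non-zero with $f^2=0$ and let $b=\mathbb{R}_{>0}f$ be the corresponding rational boundary point. Then there exists $\alpha_0>0$ such that for every $0<\alpha\le\alpha_0$ the closed horoball $\mathrm{HB}=\mathrm{HB}_b(\alpha)$ satisfies: (1) for $v\in\mathcal{V}$, the hyperplane $\pi_L((v)^\perp)$ of $\mathcal{H}_L$ intersects $\mathrm{HB}$ if and only if $\langle v,f\rangle=0$ (i.e. $\pi_L((v)^\perp)$ passes through $b$ at infinity); (2) for every $\mathcal{V}^*$-chamber $D$: if $f$ does not lie in the closure $\overline{D}$ of $D$ in $L\otimes\mathbb{R}$, then $\pi_L(D)\cap\mathrm{HB}=\emptyset$, whereas if $f\in\overline{D}$ then $\pi_L(D)\cap\mathrm{HB}=\rho_b^{-1}(\pi_L(D)\cap\partial\mathrm{HB})$. (V1) There is $c>0$ with $-v^2<c$ for all $v\in\mathcal{V}$. (V2) $\mathcal{V}$ is $G$-invariant. (V3) Every $\mathcal{V}^*$-chamber has a finite defining set. (V4) For every $\mathcal{V}^*$-chamber $D$, every non-zero $x\in\overline{D}$ with $x^2=0$ is a positive real multiple of a vector of $L$.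
   Context: $L$ is an even hyperbolic lattice (free $\mathbb{Z}$-module of rank $n>1$ with non-degenerate even symmetric bilinear form $\langle\ ,\ \rangle$ of signature $(1,n-1)$, extended to $L\otimes\mathbb{R}$); $L^\vee$ its dual lattice; $\mathcal{P}_L$ a connected component of $\{x:x^2>0\}$, $\overline{\mathcal{P}}_L$ its closure; $\mathrm{O}^+(L)$ the isometries preserving $\mathcal{P}_L$. $\mathcal{N}_L=\{v: v^2<0\}$, $(v)^\perp=\{x\in\mathcal{P}_L:\langle x,v\rangle=0\}$, $\Sigma_L(\Delta)=\{x:\langle x,v\rangle\ge0\ \forall v\in\Delta\}$. A $\mathcal{V}^*$-chamber is the closure in $\mathcal{P}_L$ of a connected component of $\mathcal{P}_L\setminus\bigcup_{v\in\mathcal{V}}(v)^\perp$; a defining set of such $D$ is $\Delta\subset\mathcal{N}_L\cap L^\vee$ with $D=\Sigma_L(\Delta)\cap\mathcal{P}_L$. $\mathcal{H}_L=\mathcal{P}_L/\mathbb{R}_{>0}$ is the hyperbolic space with projection $\pi_L:\mathcal{P}_L\to\mathcal{H}_L$. For $\alpha>0$ the closed horoball with base $b$ is $\mathrm{HB}_b(\alpha)=\pi_L(\{x\in\mathcal{P}_L:\langle x,f\rangle^2/x^2\le\alpha\})$, with boundary horosphere $\partial\mathrm{HB}_b(\alpha)=\pi_L(\{x\in\mathcal{P}_L:\langle x,f\rangle^2/x^2=\alpha\})$. The natural projection $\rho_b:\mathrm{HB}_b(\alpha)\to\partial\mathrm{HB}_b(\alpha)$ sends a point $p$ to the unique point of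 $\partial\mathrm{HB}_b(\alpha)$ on the geodesic line of $\mathcal{H}_L$ through $p$ that passes through $b$ at infinity (the image under $\pi_L$ of $\mathcal{P}_L\cap(\mathbb{R}x+\mathbb{R}f)$ for $x$ a representative of $p$). *)

(* Defs.v *)
From HB Require Import structures.
From mathcomp Require Import all_boot all_order all_algebra.
From mathcomp Require Import all_classical all_reals all_analysis.
Set Implicit Arguments. Unset Strict Implicit. Unset Printing Implicit Defensive.
Import Order.TTheory GRing.Theory Num.Theory.
Import numFieldTopology.Exports numFieldNormedType.Exports.
Local Open Scope classical_set_scope.
Local Open Scope ring_scope.

(* The lattice L is Z^n (integer row vectors) with Gram matrix Q : 'M[int]_n.
   L (x) R is 'rV[R]_n, with the R-bilinear extension of the form. *)

Definition Qr (R : realType) (n : nat) (Q : 'M[int]_n) : 'M[R]_n :=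
  map_mx (fun z : int => z%:~R) Q.

Definition bil (R : realType) (n : nat) (Q : 'M[int]_n) (x y : 'rV[R]_n) : R :=
  (x *m Qr R Q *m y^T) 0 0.

Definition inL (R : realType) (n : nat) (x : 'rV[R]_n) : Prop :=
  exists z : 'rV[int]_n, x = map_mx (fun k : int => k%:~R) z.

Definition inLdual (R : realType) (n : nat) (Q : 'M[int]_n) (x : 'rV[R]_n) : Prop :=
  forall y, inL y -> exists k : int, bil Q x y = k%:~R.

Definition hyp_signature (R : realType) (n : nat) (Q : 'M[int]_n) : Prop :=
  exists P : 'M[R]_n, P \in unitmx /\
    P *m Qr R Q *m P^T = diag_mx (\row_(i < n) if (i : nat) == 0%N then 1 else -1).

Definition even_hyperbolic_lattice (R : realType) (n : nat) (Q : 'M[int]_n) : Prop :=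
  [/\ (1 < n)%N, Q^T = Q, \det Q != 0,
      (forall z : 'rV[int]_n, (z *m Q *m z^T) 0 0 \in dvdz 2)
    & hyp_signature R Q].

(* The positive cone P_L: the connected component of {x^2 > 0} containing h *)
Definition posCone (R : realType) (n : nat) (Q : 'M[int]_n) (h : 'rV[R]_n) :
  set 'rV[R]_n := [set x | 0 < bil Q x x /\ 0 < bil Q x h].

Definition actR (R : realType) (n : nat) (g : 'M[int]_n) : 'M[R]_n :=
  map_mx (fun z : int => z%:~R) g.

Definition OplusL (R : realType) (n : nat) (Q : 'M[int]_n) (h : 'rV[R]_n)
  (g : 'M[int]_n) : Prop :=
  [/\ g \in unitmx, g *m Q *m g^T = Q &
      forall x, posCone Q h x -> posCone Q h (x *m actR R g)].

Definition finite_index_subgroup (R : realType) (n : nat) (Q : 'M[int]_n)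
  (h : 'rV[R]_n) (G : set 'M[int]_n) : Prop :=
  [/\ G `<=` OplusL Q h, G 1%:M,
      (forall g1 g2, G g1 -> G g2 -> G (g1 *m g2)),
      (forall g, G g -> G (invmx g)) &
      exists s : seq 'M[int]_n, forall g, OplusL Q h g ->
        exists2 a, a \in s & G (invmx a *m g)].

Definition negL (R : realType) (n : nat) (Q : 'M[int]_n) : set 'rV[R]_n :=
  [set v | bil Q v v < 0].

Definition perpP (R : realType) (n : nat) (Q : 'M[int]_n) (h v : 'rV[R]_n) :
  set 'rV[R]_n := [set x | posCone Q h x /\ bil Q x v = 0].

Definition SigmaL (R : realType) (n : nat) (Q : 'M[int]_n) (Delta : set 'rV[R]_n) :
  set 'rV[R]_n := [set x | forall v, Delta v -> 0 <= bil Q x v].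

Definition chamber_open_part (R : realType) (n : nat) (Q : 'M[int]_n)
  (h : 'rV[R]_n) (V : set 'rV[R]_n) : set 'rV[R]_n :=
  posCone Q h `\` \bigcup_(v in V) perpP Q h v.

Definition is_chamber (R : realType) (n : nat) (Q : 'M[int]_n)
  (h : 'rV[R]_n) (V : set 'rV[R]_n) (D : set 'rV[R]_n) : Prop :=
  exists2 x, chamber_open_part Q h V x &
    D = closure (connected_component (chamber_open_part Q h V) x) `&` posCone Q h.

Definition defining_set (R : realType) (n : nat) (Q : 'M[int]_n)
  (h : 'rV[R]_n) (D Delta : set 'rV[R]_n) : Prop :=
  Delta `<=` negL Q `&` inLdual Q /\ D = SigmaL Q Delta `&` posCone Q h.

(* Hyperbolic space H_L = P_L / R_{>0}: a point is an open ray {t x | t > 0}. *)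
Definition ray (R : realType) (n : nat) (x : 'rV[R]_n) : set 'rV[R]_n :=
  [set t *: x | t in [set t : R | 0 < t]].

Definition piL (R : realType) (n : nat) (A : set 'rV[R]_n) : set (set 'rV[R]_n) :=
  (@ray R n) @` A.

Definition horoball (R : realType) (n : nat) (Q : 'M[int]_n) (h f : 'rV[R]_n)
  (alpha : R) : set (set 'rV[R]_n) :=
  piL [set x | posCone Q h x /\ (bil Q x f) ^+ 2 / bil Q x x <= alpha].

Definition horosphere (R : realType) (n : nat) (Q : 'M[int]_n) (h f : 'rV[R]_n)
  (alpha : R) : set (set 'rV[R]_n) :=
  piL [set x | posCone Q h x /\ (bil Q x f) ^+ 2 / bil Q x x = alpha].

(* rho_b(p) = q : q is the point of the horosphere on the geodesic line
   pi_L(P_L cap (R x + R f)) through p = pi_L(x) and b. *)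
Definition rho_rel (R : realType) (n : nat) (Q : 'M[int]_n) (h f : 'rV[R]_n)
  (alpha : R) (p q : set 'rV[R]_n) : Prop :=
  exists2 x, posCone Q h x /\ p = ray x &
    horosphere Q h f alpha q /\
    piL (posCone Q h `&` [set a *: x + c *: f | a in setT & c in setT]) q.

Definition rho_preimage (R : realType) (n : nat) (Q : 'M[int]_n) (h f : 'rV[R]_n)
  (alpha : R) (S : set (set 'rV[R]_n)) : set (set 'rV[R]_n) :=
  [set p | horoball Q h f alpha p /\
           exists2 q, rho_rel Q h f alpha p q & S q].

(* Main.v *)
Require Import Defs.
From HB Require Import structures.
From mathcomp Require Import all_boot all_order all_algebra.
From mathcomp Require Import all_classical all_reals all_analysis.
From mathcomp Require Import ring lra.
Import Order.TTheory GRing.Theory Num.Theory.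
Import numFieldTopology.Exports numFieldNormedType.Exports.
Local Open Scope classical_set_scope.
Local Open Scope ring_scope.
Set Implicit Arguments. Unset Strict Implicit. Unset Printing Implicit Defensive.
Lemma bilDl (R : realType) n (Q : 'M[int]_n) (x y z : 'rV[R]_n) :
  bil Q (x + y) z = bil Q x z + bil Q y z.
Proof. by rewrite /bil !mulmxDl mxE. Qed.
Lemma bilZl (R : realType) n (Q : 'M[int]_n) (a : R) (x z : 'rV[R]_n) :
  bil Q (a *: x) z = a * bil Q x z.
Proof. by rewrite /bil -!scalemxAl mxE. Qed.
Lemma bilNl (R : realType) n (Q : 'M[int]_n) (x z : 'rV[R]_n) :
  bil Q (- x) z = - bil Q x z.
Proof. by rewrite /bil !mulNmx mxE. Qed.
Lemma bilDr (R : realType) n (Q : 'M[int]_n) (x y z : 'rV[R]_n) :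
  bil Q z (x + y) = bil Q z x + bil Q z y.
Proof. by rewrite /bil linearD /= mulmxDr mxE. Qed.
Lemma bilZr (R : realType) n (Q : 'M[int]_n) (a : R) (x z : 'rV[R]_n) :
  bil Q z (a *: x) = a * bil Q z x.
Proof. by rewrite /bil linearZ /= -scalemxAr mxE. Qed.
Lemma bilNr (R : realType) n (Q : 'M[int]_n) (x z : 'rV[R]_n) :
  bil Q z (- x) = - bil Q z x.
Proof. by rewrite /bil linearN /= mulmxN mxE. Qed.
Lemma bil_sym (R : realType) n (Q : 'M[int]_n) (x y : 'rV[R]_n) :
  Q^T = Q -> bil Q x y = bil Q y x.
Proof.
move=> QT; rewrite /bil.
have -> : forall A : 'M[R]_1, A 0 0 = A^T 0 0 by move=> A; rewrite mxE.
by rewrite !trmx_mul trmxK /Qr map_trmx QT mulmxA.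
Qed.

Lemma diag_quad (R : realType) n (u : 'rV[R]_n) (e : 'rV[R]_n) :
  (u *m diag_mx e *m u^T) 0 0 = \sum_j e 0 j * u 0 j ^+ 2.
Proof.
rewrite mul_mx_diag mxE; apply: eq_bigr => j _; rewrite !mxE; ring.
Qed.

Lemma sig_decomp (R : realType) n (Q : 'M[int]_n) :
  hyp_signature R Q -> (0 < n)%N ->
  exists phi : 'rV[R]_n -> R,
    [/\ forall a x y, phi (a *: x + y) = a * phi x + phi y,
        forall x, bil Q x x <= phi x ^+ 2 &
        forall x, phi x = 0 -> bil Q x x = 0 -> x = 0].
Proof.
move=> [P [Pu PQ]] n0; set i0 : 'I_n := Ordinal n0.
exists (fun x => (x *m invmx P) 0 i0).
have bilE : forall x, bil Q x x =
   \sum_j (\row_(i < n) if (i : nat) == 0%N then 1 else -1 : R) 0 j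
        * (x *m invmx P) 0 j ^+ 2.
  move=> x; rewrite -diag_quad -PQ /bil.
  set u := x *m invmx P; have xE : x = u *m P by rewrite /u mulmxKV.
  by rewrite {1 2}xE trmx_mul !mulmxA.
have split_sum : forall x, bil Q x x =
    (x *m invmx P) 0 i0 ^+ 2 - \sum_(j | j != i0) (x *m invmx P) 0 j ^+ 2.
  move=> x; rewrite bilE (bigD1 i0) //= mxE eqxx mul1r; congr (_ + _).
  rewrite -sumrN; apply: eq_bigr => j ji0; rewrite mxE.
  have -> : ((j : nat) == 0%N) = false.
    by apply/negbTE; apply: contra ji0 => /eqP j0; apply/eqP/val_inj.
  by rewrite mulN1r.
split.
- by move=> a x y; rewrite mulmxDl -scalemxAl !mxE.
- move=> x; rewrite split_sum lerBlDr lerDl; apply: sumr_ge0 => j _.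
  exact: sqr_ge0.
- move=> x p0; rewrite split_sum p0 expr0n /= sub0r => /eqP; rewrite oppr_eq0.
  rewrite psumr_eq0 => [/allP H|]; last by move=> j _; exact: sqr_ge0.
  rewrite -(mulmxKV Pu x); suff -> : x *m invmx P = 0 by rewrite mul0mx.
  apply/rowP => j; rewrite [RHS]mxE.
  have [->|ji0] := eqVneq j i0; first by rewrite p0.
  have := H j (mem_index_enum j); rewrite ji0 /= sqrf_eq0 => /eqP //.
Qed.

Lemma quad_disc (R : realType) (A B X : R) :
  (forall t, 0 <= A + 2 * t * X + t ^+ 2 * B) -> 0 <= B -> X ^+ 2 <= A * B.
Proof.
move=> H B0; have A0 : 0 <= A by have := H 0; rewrite expr0n /=; nra.
have [Bz|Bp] := eqVneq B 0.
  have [Xz|Xn] := eqVneq X 0; first by rewrite Xz Bz expr0n /= mulr0.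
  have := H (- (A + 1) / (2 * X)); rewrite Bz mulr0 addr0.
  have -> : 2 * (- (A + 1) / (2 * X)) * X = - (A + 1).
    by field; rewrite Xn.
  lra.
have Bp' : 0 < B by rewrite lt_neqAle eq_sym Bp B0.
have := H (- X / B).
have -> : A + 2 * (- X / B) * X + (- X / B) ^+ 2 * B = (A * B - X ^+ 2) / B.
  by field; rewrite Bp.
by rewrite pmulr_lge0 ?invr_gt0 // subr_ge0.
Qed.

Definition sigphi (R : realType) n (Q : 'M[int]_n) (phi : 'rV[R]_n -> R) :=
  [/\ forall a x y, phi (a *: x + y) = a * phi x + phi y,
      forall x, bil Q x x <= phi x ^+ 2 &
      forall x, phi x = 0 -> bil Q x x = 0 -> x = 0].

Lemma phi0 (R : realType) n (Q : 'M[int]_n) (phi : 'rV[R]_n -> R) : sigphi Q phi -> phi 0 = 0.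
Proof.
move=> [L _ _]; have := L 1 0 0; rewrite scaler0 addr0 mul1r.
by move=> E; lra.
Qed.
Lemma phiD (R : realType) n (Q : 'M[int]_n) (phi : 'rV[R]_n -> R) : sigphi Q phi ->
  forall x y, phi (x + y) = phi x + phi y.
Proof. by move=> [L _ _] x y; rewrite -{1}[x]scale1r L mul1r. Qed.
Lemma phiZ (R : realType) n (Q : 'M[int]_n) (phi : 'rV[R]_n -> R) : sigphi Q phi ->
  forall a x, phi (a *: x) = a * phi x.
Proof.
move=> H a x; move: (H) => [L _ _]; rewrite -[a *: x]addr0 L.
by rewrite (phi0 H) addr0.
Qed.

Lemma psi_quad (R : realType) n (Q : 'M[int]_n) (phi : 'rV[R]_n -> R) (a b : 'rV[R]_n) t :
  Q^T = Q -> sigphi Q phi ->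
  phi (a + t *: b) ^+ 2 - bil Q (a + t *: b) (a + t *: b) =
  (phi a ^+ 2 - bil Q a a) + 2 * t * (phi a * phi b - bil Q a b)
    + t ^+ 2 * (phi b ^+ 2 - bil Q b b).
Proof.
move=> QT H; rewrite (phiD H) (phiZ H) !bilDl !bilDr !bilZl !bilZr.
rewrite (bil_sym b a QT); ring.
Qed.

Lemma sign_lemma (R : realType) n (Q : 'M[int]_n) (phi : 'rV[R]_n -> R) (a b : 'rV[R]_n) :
  Q^T = Q -> sigphi Q phi -> 0 < bil Q a a -> 0 <= bil Q b b -> b != 0 ->
  0 < bil Q a b * (phi a * phi b).
Proof.
move=> QT H a2 b2 bn; have [L Bd Nd] := H.
have fb : phi b != 0.
  apply/eqP => fb0; move/eqP: bn; apply; apply: Nd => //.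
  by apply/eqP; rewrite eq_le b2 andbT; have := Bd b; rewrite fb0 expr0n.
have fa2 : 0 < phi a ^+ 2 by have := Bd a; lra.
have fb2 : 0 < phi b ^+ 2 by rewrite exprn_even_gt0.
have CS : (phi a * phi b - bil Q a b) ^+ 2 <=
    (phi a ^+ 2 - bil Q a a) * (phi b ^+ 2 - bil Q b b).
  apply: quad_disc; last by have := Bd b; lra.
  by move=> t; rewrite -psi_quad // subr_ge0.
have Ba := Bd a; have Bb := Bd b.
set A := phi a ^+ 2 - bil Q a a in CS; set B := phi b ^+ 2 - bil Q b b in CS.
set X := phi a * phi b - bil Q a b in CS.
have AB : A * B < phi a ^+ 2 * phi b ^+ 2.
  have B0 : 0 <= B by rewrite /B; lra.
  have A1 : A < phi a ^+ 2 by rewrite /A; lra.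
  have B1 : B <= phi b ^+ 2 by rewrite /B; lra.
  have A0 : 0 <= A by rewrite /A; lra.
  nra.
have E : bil Q a b = phi a * phi b - X by rewrite /X; ring.
rewrite E; set P := phi a * phi b in E *.
have P2 : P ^+ 2 = phi a ^+ 2 * phi b ^+ 2 by rewrite /P exprMn.
nra.
Qed.

Lemma cont_sum (T : topologicalType) (R : realType) (I : Type) (r : seq I)
  (F : I -> T -> R) : (forall i, continuous (F i)) ->
  continuous (fun y => \sum_(i <- r) F i y).
Proof.
move=> Fc; elim: r => [|a r IH].
  by under eq_fun do rewrite big_nil; exact: cst_continuous.
under eq_fun do rewrite big_cons.
by move=> x; apply: continuousD; [exact: Fc | exact: IH].
Qed.

Lemma bil_contl (R : realType) n (Q : 'M[int]_n) (z : 'rV[R]_n) :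
  continuous (fun y : 'rV[R]_n => bil Q y z).
Proof.
have E : (fun y : 'rV[R]_n => bil Q y z) =
   (fun y => \sum_j y 0 j * (Qr R Q *m z^T) j 0).
  by apply/funext => y; rewrite /bil -mulmxA mxE.
rewrite E; apply: cont_sum => j y.
by apply: continuousM; [exact: coord_continuous | exact: cst_continuous].
Qed.

Lemma nbhs_gt0 (T : topologicalType) (R : realType) (g : T -> R) (d : T) :
  continuous g -> 0 < g d -> nbhs d [set y | 0 < g y].
Proof.
move=> gc gd; have := gc d; move=> /(_ [set r : R | 0 < r]).
apply; apply: open_nbhs_nbhs; split => //; exact: open_gt.
Qed.

Lemma bil_diag_cont (R : realType) n (Q : 'M[int]_n) :
  continuous (fun y : 'rV[R]_n => bil Q y y).
Proof.
have E : (fun y : 'rV[R]_n => bil Q y y) =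
   (fun y => \sum_j (\sum_k y 0 k * Qr R Q k j) * y 0 j).
  by apply/funext => y; rewrite /bil mxE; apply: eq_bigr => j _; rewrite !mxE.
rewrite E; apply: cont_sum => j.
have H1 : continuous (fun y : 'rV[R]_n => \sum_k y 0 k * Qr R Q k j).
  apply: cont_sum => k z.
  by apply: continuousM; [exact: coord_continuous | exact: cst_continuous].
by move=> y; apply: continuousM; [exact: H1 | exact: coord_continuous].
Qed.

Lemma shift_cont (R : realType) n (w : 'rV[R]_n) (g : 'rV[R]_n -> R) :
  continuous g -> continuous (fun y : 'rV[R]_n => g (y + w)).
Proof.
move=> gc y.
have -> : (fun y => g (y + w)) = g \o (fun y => y + w) by [].
apply: continuous_comp; last exact: gc.
exact: (cvg_comp2 cvg_id (cvg_cst _) (add_continuous (_, _))).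
Qed.

Lemma bil0l (R : realType) n (Q : 'M[int]_n) (z : 'rV[R]_n) : bil Q 0 z = 0.
Proof. by rewrite /bil !mul0mx mxE. Qed.

Lemma nz_of_pos (R : realType) n (Q : 'M[int]_n) (h : 'rV[R]_n) :
  0 < bil Q h h -> h != 0.
Proof. by move=> h2; apply/eqP => h0; move: h2; rewrite h0 bil0l ltxx. Qed.

Lemma pos_phi (R : realType) n (Q : 'M[int]_n) (phi : 'rV[R]_n -> R) (h x : 'rV[R]_n) :
  Q^T = Q -> sigphi Q phi -> 0 < bil Q h h -> posCone Q h x ->
  0 < phi x * phi h.
Proof.
move=> QT H h2 [x2 xh].
have := sign_lemma QT H x2 (ltW h2) (nz_of_pos h2).
by rewrite pmulr_rgt0.
Qed.

Lemma f_h (R : realType) n (Q : 'M[int]_n) (phi : 'rV[R]_n -> R) (h f : 'rV[R]_n) :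
  Q^T = Q -> sigphi Q phi -> 0 < bil Q h h ->
  closure (posCone Q h) f -> f != 0 -> bil Q f f = 0 ->
  0 < bil Q f h /\ 0 < phi f * phi h.
Proof.
move=> QT H h2 fcl fn f2.
have fh : 0 <= bil Q f h.
  rewrite leNgt; apply/negP => fh.
  have Nb : nbhs f [set y | 0 < bil Q y (- h)].
    apply: nbhs_gt0; last by rewrite bilNr oppr_gt0.
    exact: bil_contl.
  have [y [[_ yh] /= yN]] := fcl _ Nb.
  by move: yN; rewrite bilNr oppr_gt0 ltNge (ltW yh).
have f2' : 0 <= bil Q f f by rewrite f2.
have := sign_lemma QT H h2 f2' fn.
rewrite (bil_sym h f QT) => S.
have fh' : 0 < bil Q f h.
  move: fh; rewrite le_eqVlt => /orP[/eqP fh0|//].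
  by move: S; rewrite -fh0 mul0r ltxx.
split => //; move: S; rewrite pmulr_rgt0 // mulrC //.
Qed.

Lemma sgn3 (R : realType) (a b c : R) : 0 < a * b -> 0 < c * b -> 0 < a * c.
Proof.
move=> ab cb; have P := mulr_gt0 ab cb.
have E : a * b * (c * b) = (a * c) * (b * b) by ring.
rewrite E in P; rewrite ltNge; apply/negP => ac.
have : a * c * (b * b) <= 0 by apply: mulr_le0_ge0 => //; exact: mulr_ge0_le0 || nra.
lra.
Qed.

Lemma x_f (R : realType) n (Q : 'M[int]_n) (phi : 'rV[R]_n -> R) (h f x : 'rV[R]_n) :
  Q^T = Q -> sigphi Q phi -> 0 < bil Q h h ->
  closure (posCone Q h) f -> f != 0 -> bil Q f f = 0 ->
  posCone Q h x -> 0 < bil Q x f.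
Proof.
move=> QT H h2 fcl fn f2 xP.
have [_ fh] := f_h QT H h2 fcl fn f2.
have xh := pos_phi QT H h2 xP.
have xf := sgn3 xh fh.
have f2' : 0 <= bil Q f f by rewrite f2.
have := sign_lemma QT H (proj1 xP) f2' fn.
by rewrite pmulr_lgt0.
Qed.

Lemma z_h (R : realType) n (Q : 'M[int]_n) (phi : 'rV[R]_n -> R) (h f z : 'rV[R]_n) :
  Q^T = Q -> sigphi Q phi -> 0 < bil Q h h ->
  closure (posCone Q h) f -> f != 0 -> bil Q f f = 0 ->
  0 < bil Q z z -> 0 < bil Q z f -> 0 < bil Q z h.
Proof.
move=> QT H h2 fcl fn f2 z2 zf.
have [_ fh] := f_h QT H h2 fcl fn f2.
have f2' : 0 <= bil Q f f by rewrite f2.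
have := sign_lemma QT H z2 f2' fn; rewrite pmulr_rgt0 // => zf'.
have zh : 0 < phi z * phi h by apply: (sgn3 zf'); rewrite mulrC.
have := sign_lemma QT H z2 (ltW h2) (nz_of_pos h2).
by rewrite pmulr_lgt0.
Qed.

Lemma int_sq_ge1 (R : realType) (k : int) : k != 0 -> 1 <= (k%:~R : R) ^+ 2.
Proof.
move=> kn; have h1 : 1 <= `|(k%:~R : R)|.
  by rewrite -intr_norm ler1z -gtz0_ge1 normr_gt0.
rewrite -real_normK ?num_real //; nra.
Qed.

Lemma orth_f_nonpos (R : realType) n (Q : 'M[int]_n) (phi : 'rV[R]_n -> R)
  (f w : 'rV[R]_n) :
  Q^T = Q -> sigphi Q phi -> f != 0 -> bil Q f f = 0 -> bil Q w f = 0 ->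
  bil Q w w <= 0.
Proof.
move=> QT H fn f2 wf; rewrite leNgt; apply/negP => w2.
have f2' : 0 <= bil Q f f by rewrite f2.
by have := sign_lemma QT H w2 f2' fn; rewrite wf mul0r ltxx.
Qed.

Lemma wall_lemma (R : realType) n (Q : 'M[int]_n) (phi : 'rV[R]_n -> R)
  (f v x : 'rV[R]_n) (c : R) :
  Q^T = Q -> sigphi Q phi -> f != 0 -> bil Q f f = 0 -> inL f ->
  inLdual Q v -> - bil Q v v < c -> 0 < bil Q x x -> bil Q x v = 0 ->
  c * bil Q x f ^+ 2 < bil Q x x -> bil Q v f = 0.
Proof.
move=> QT H fn f2 fL vD vc x2 xv xc.
have [k vk] := vD f fL.
have [k0|kn] := eqVneq k 0; first by rewrite vk k0.
have q1 := int_sq_ge1 R kn; rewrite -vk in q1.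
set q := bil Q v f in q1.
pose w := bil Q x f *: v - q *: x.
have wf : bil Q w f = 0.
  by rewrite /w bilDl bilNl !bilZl /q; ring.
have := orth_f_nonpos QT H fn f2 wf.
rewrite /w !(bilDl, bilDr, bilNl, bilNr, bilZl, bilZr) (bil_sym v x QT) xv.
move=> W.
have W' : q ^+ 2 * bil Q x x <= - bil Q v v * bil Q x f ^+ 2 by nra.
have xf2 : 0 <= bil Q x f ^+ 2 by exact: sqr_ge0.
nra.
Qed.

Lemma seg_conn (R : realType) n (O : set 'rV[R]_n) (x0 y e : 'rV[R]_n) :
  connected_component O x0 y ->
  (forall t : R, 0 <= t <= 1 -> O (y + t *: e)) ->
  connected_component O x0 (y + e).
Proof.
move=> Cy Hs.
pose g := fun t : R => y + t *: e.
have gc : continuous g.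
  move=> t; apply: (cvg_comp2 (cvg_cst _) _ (add_continuous (_, _))).
  exact: scalel_continuous.
have Sc : connected (g @` `[0, 1]%classic).
  apply: connected_continuous_connected; last exact: continuous_subspaceT.
  by apply/connected_intervalP; exact: interval_is_interval.
have SO : g @` `[0, 1]%classic `<=` O.
  by move=> z [t /= t01 <-]; apply: Hs; rewrite in_itv /= in t01.
have Sy : (g @` `[0, 1]%classic) y.
  by exists 0; [rewrite /= in_itv /= lexx ler01 | rewrite /g scale0r addr0].
rewrite (same_connected_component Cy).
apply: (connected_component_max Sy SO Sc).
by exists 1; [rewrite /= in_itv /= lexx ler01 | rewrite /g scale1r].
Qed.

Lemma closure_map (T : topologicalType) (C W : set T) (phi : T -> T) (d : T) :
  closure C d -> nbhs d W -> {for d, continuous phi} ->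
  (forall y, C y -> W y -> C (phi y)) -> closure C (phi d).
Proof.
move=> Cd Wd pc Hm B NB.
have NB' : nbhs d (phi @^-1` B) by exact: pc.
have [y [Cy [Wy By]]] := Cd _ (filterI Wd NB').
by exists (phi y); split => //; apply: Hm.
Qed.
Lemma cont_comb (T : topologicalType) (R : realType) (g1 g2 : T -> R) (c : R) :
  continuous g1 -> continuous g2 ->
  continuous (fun y => g1 y - c * (g2 y * g2 y)).
Proof.
move=> c1 c2 y.
apply: cvgB; first exact: c1.
apply: cvgM; first exact: cvg_cst.
by apply: cvgM; exact: c2.
Qed.

Lemma conv_pos (R : realType) (a b t : R) :
  0 < a -> 0 < b -> 0 <= t -> t <= 1 -> 0 < (1 - t) * a + t * b.
Proof.
move=> a0 b0 t0 t1; have [->|tp] := eqVneq t 0; first by rewrite subr0 mul1r mul0r addr0.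
have tp' : 0 < t by rewrite lt_neqAle eq_sym tp t0.
have : 0 <= (1 - t) * a by apply: mulr_ge0; lra.
have : 0 < t * b by apply: mulr_gt0.
lra.
Qed.

Record Sett (R : realType) n (Q : 'M[int]_n) (phi : 'rV[R]_n -> R)
  (h f : 'rV[R]_n) (V : set 'rV[R]_n) (c : R) : Prop := {
  sQT : Q^T = Q; sphi : sigphi Q phi; sh2 : 0 < bil Q h h;
  sfcl : closure (posCone Q h) f; sfn : f != 0; sf2 : bil Q f f = 0;
  sfL : inL f; sV : V `<=` negL Q `&` inLdual Q;
  sVc : forall v, V v -> - bil Q v v < c; sc : 0 < c }.

Lemma bil_shift (R : realType) n (Q : 'M[int]_n) (f y : 'rV[R]_n) (a : R) :
  Q^T = Q -> bil Q f f = 0 ->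
  bil Q (y + a *: f) (y + a *: f) = bil Q y y + 2 * a * bil Q y f.
Proof.
move=> QT f2; rewrite !(bilDl, bilDr, bilZl, bilZr) f2 (bil_sym f y QT); ring.
Qed.

Lemma bil_shift_f (R : realType) n (Q : 'M[int]_n) (f y : 'rV[R]_n) (a : R) :
  bil Q f f = 0 -> bil Q (y + a *: f) f = bil Q y f.
Proof. by move=> f2; rewrite bilDl bilZl f2 mulr0 addr0. Qed.

Lemma move_lemma (R : realType) n (Q : 'M[int]_n) (phi : 'rV[R]_n -> R)
  (h f : 'rV[R]_n) (V : set 'rV[R]_n) (c : R) (x0 d : 'rV[R]_n) (s : R) :
  Sett Q phi h f V c ->
  closure (connected_component (chamber_open_part Q h V) x0) d ->
  posCone Q h d -> posCone Q h (d + s *: f) ->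
  c * bil Q d f ^+ 2 < bil Q d d ->
  c * bil Q d f ^+ 2 < bil Q (d + s *: f) (d + s *: f) ->
  closure (connected_component (chamber_open_part Q h V) x0) (d + s *: f).
Proof.
move=> S Cd [d2 dh] [z2 zh] c1 c2.
have QT := sQT S; have f2 := sf2 S.
pose W := [set y | [/\ 0 < bil Q y y, 0 < bil Q y h,
   0 < bil Q (y + s *: f) h,
   0 < bil Q y y - c * (bil Q y f * bil Q y f) &
   0 < bil Q (y + s *: f) (y + s *: f) - c * (bil Q y f * bil Q y f)]].
have NW : nbhs d W.
  have n1 : nbhs d [set y | 0 < bil Q y y] by apply: nbhs_gt0 => //; exact: bil_diag_cont.
  have n2 : nbhs d [set y | 0 < bil Q y h] by apply: nbhs_gt0 => //; exact: bil_contl.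
  have n3 : nbhs d [set y | 0 < bil Q (y + s *: f) h].
    apply: nbhs_gt0 => //; exact: (@shift_cont _ _ (s *: f) (fun y => bil Q y h) (@bil_contl _ _ Q h)).
  have n4 : nbhs d [set y | 0 < bil Q y y - c * (bil Q y f * bil Q y f)].
    apply: nbhs_gt0; first by apply: cont_comb; [exact: bil_diag_cont | exact: bil_contl].
    by rewrite subr_gt0 -expr2.
  have n5 : nbhs d [set y | 0 < bil Q (y + s *: f) (y + s *: f) - c * (bil Q y f * bil Q y f)].
    apply: nbhs_gt0; last by rewrite subr_gt0 -expr2.
    apply: cont_comb; last exact: bil_contl.
    exact: (@shift_cont _ _ (s *: f) (fun y => bil Q y y) (@bil_diag_cont _ _ Q)).
  by apply: filter_app n5; apply: filter_app n4; apply: filter_app n3;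
     apply: filter_app n2; apply: filter_app n1; apply: filterE => y *; split.
apply: (@closure_map _ _ W (fun y => y + s *: f) d Cd NW).
  exact: (cvg_comp2 cvg_id (cvg_cst _) (add_continuous (_, _))).
move=> y Cy [y2 yh yh' yc yc'].
have Oy := connected_component_sub Cy.
apply: seg_conn => // t /andP[t0 t1].
rewrite scalerA; set u := y + (t * s) *: f.
have uu : bil Q u u = (1 - t) * bil Q y y + t * bil Q (y + s *: f) (y + s *: f).
  by rewrite /u !bil_shift //; ring.
have uh : bil Q u h = (1 - t) * bil Q y h + t * bil Q (y + s *: f) h.
  by rewrite /u !(bilDl, bilZl); ring.
have uf : bil Q u f = bil Q y f by rewrite /u bil_shift_f.
have q0 : 0 <= c * (bil Q y f * bil Q y f).
  by apply: mulr_ge0; [exact: ltW (sc S) | rewrite -expr2; exact: sqr_ge0].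
have uc : c * bil Q u f ^+ 2 < bil Q u u.
  rewrite -subr_gt0 uu uf expr2.
  have -> : (1 - t) * bil Q y y + t * bil Q (y + s *: f) (y + s *: f) -
     c * (bil Q y f * bil Q y f) = (1 - t) * (bil Q y y - c * (bil Q y f * bil Q y f))
     + t * (bil Q (y + s *: f) (y + s *: f) - c * (bil Q y f * bil Q y f)) by ring.
  exact: conv_pos.
have u2 : 0 < bil Q u u by move: uc; rewrite uf expr2; lra.
split; first by split => //; rewrite uh; exact: conv_pos.
move=> [v Vv [_ uv]].
have [_ vD] := sV S Vv.
have vf := wall_lemma (sQT S) (sphi S) (sfn S) f2 (sfL S) vD (sVc S Vv) u2 uv uc.
have yv : bil Q y v = 0.
  by move: uv; rewrite /u bilDl bilZl (bil_sym f v QT) vf mulr0 addr0.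
by case: Oy => yP; apply; exists v => //; split.
Qed.

Lemma ray_self (R : realType) n (x : 'rV[R]_n) : ray x x.
Proof. by exists 1; [rewrite /= ltr01 | rewrite scale1r]. Qed.

Lemma ray_eq (R : realType) n (x y : 'rV[R]_n) :
  ray x = ray y -> exists2 t : R, 0 < t & y = t *: x.
Proof. by move=> E; have := ray_self y; rewrite -E => -[t /= t0 <-]; exists t. Qed.

Lemma ray_scale (R : realType) n (x : 'rV[R]_n) (t : R) :
  0 < t -> ray (t *: x) = ray x.
Proof.
move=> t0; apply/seteqP; split => y [s /= s0 <-].
  by exists (s * t); [rewrite /= mulr_gt0 | rewrite scalerA].
exists (s / t); first by rewrite /= divr_gt0.
by rewrite scalerA divfK // gt_eqF.
Qed.

Lemma ratio_scale (R : realType) n (Q : 'M[int]_n) (f x : 'rV[R]_n) (t : R) :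
  t != 0 -> bil Q (t *: x) f ^+ 2 / bil Q (t *: x) (t *: x) =
            bil Q x f ^+ 2 / bil Q x x.
Proof.
move=> tn; rewrite !(bilZl, bilZr).
have [x0|xn] := eqVneq (bil Q x x) 0; first by rewrite x0 !mulr0 invr0 !mulr0.
by field; rewrite tn xn.
Qed.

Lemma posCone_scale (R : realType) n (Q : 'M[int]_n) (h x : 'rV[R]_n) (t : R) :
  0 < t -> posCone Q h x -> posCone Q h (t *: x).
Proof.
move=> t0 [x2 xh]; split; rewrite !(bilZl, bilZr); last exact: mulr_gt0.
by rewrite mulrA; apply: mulr_gt0 => //; exact: mulr_gt0.
Qed.

Lemma O_scale (R : realType) n (Q : 'M[int]_n) (h : 'rV[R]_n) V (y : 'rV[R]_n) (t : R) :
  0 < t -> chamber_open_part Q h V y -> chamber_open_part Q h V (t *: y).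
Proof.
move=> t0 [yP yW]; split; first exact: posCone_scale.
move=> [v Vv [_ tv]]; apply: yW; exists v => //; split => //.
by move: tv; rewrite bilZl => /eqP; rewrite mulf_eq0 gt_eqF //= => /eqP.
Qed.

Lemma C_scale (R : realType) n (Q : 'M[int]_n) (h : 'rV[R]_n) V (x0 y : 'rV[R]_n) (t : R) :
  0 < t -> connected_component (chamber_open_part Q h V) x0 y ->
  connected_component (chamber_open_part Q h V) x0 (t *: y).
Proof.
move=> t0 Cy.
have -> : t *: y = y + (t - 1) *: y by rewrite scalerBl scale1r addrC subrK.
apply: seg_conn => // s /andP[s0 s1].
have -> : y + s *: ((t - 1) *: y) = ((1 - s) * 1 + s * t) *: y.
  by rewrite scalerA -[X in X + _]scale1r -scalerDl; congr (_ *: _); ring.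
apply: O_scale; first by apply: conv_pos => //; exact: ltr01.
exact: connected_component_sub Cy.
Qed.

Lemma closC_scale (R : realType) n (Q : 'M[int]_n) (h : 'rV[R]_n) V (x0 d : 'rV[R]_n) (t : R) :
  0 < t -> closure (connected_component (chamber_open_part Q h V) x0) d ->
  closure (connected_component (chamber_open_part Q h V) x0) (t *: d).
Proof.
move=> t0 Cd.
have NT : nbhs d setT by apply: filterT.
apply: (@closure_map _ _ setT (fun y : 'rV[R]_n => t *: y) d Cd NT).
  exact: scaler_continuous.
by move=> y Cy _; exact: C_scale.
Qed.
Lemma nbhs0_pos (R : realType) (A : set R) : nbhs (0 : R) A -> exists2 e : R, 0 < e & A e.
Proof.
move=> /nbhs_ballP [e /= e0 He]; exists (e / 2); first by rewrite divr_gt0.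
apply: He; rewrite /ball /= sub0r normrN gtr0_norm ?divr_gt0 //.
by rewrite ltr_pdivrMr // ltr_pMr // ltr1n.
Qed.

Lemma ray_ratio (R : realType) n (Q : 'M[int]_n) (f x y : 'rV[R]_n) :
  ray x = ray y -> bil Q y f ^+ 2 / bil Q y y = bil Q x f ^+ 2 / bil Q x x.
Proof. by move=> /ray_eq [t t0 ->]; rewrite ratio_scale // gt_eqF. Qed.

Unset Implicit Arguments.

Theorem corollary3p12 (R : realType) (n : nat) (Q : 'M[int]_n)
  (h : 'rV[R]_n) (G : set 'M[int]_n) (V : set 'rV[R]_n) (f : 'rV[R]_n) :
  even_hyperbolic_lattice R Q ->
  0 < bil Q h h ->
  finite_index_subgroup Q h G ->
  V `<=` negL Q `&` inLdual Q ->
  (* (V1) *)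
  (exists2 c : R, 0 < c & forall v, V v -> - bil Q v v < c) ->
  (* (V2) *)
  (forall g, G g -> forall v, V (v *m actR R g) <-> V v) ->
  (* (V3) *)
  (forall D, is_chamber Q h V D ->
     exists s : seq 'rV[R]_n, defining_set Q h D [set v | v \in s]) ->
  (* (V4) *)
  (forall D, is_chamber Q h V D -> forall x, closure D x -> x != 0 ->
     bil Q x x = 0 -> exists2 t : R, 0 < t & exists2 y, inL y & x = t *: y) ->
  closure (posCone Q h) f -> inL f -> f != 0 -> bil Q f f = 0 ->
  exists2 alpha0 : R, 0 < alpha0 & forall alpha : R, 0 < alpha -> alpha <= alpha0 ->
    (forall v, V v ->
       (piL (perpP Q h v) `&` horoball Q h f alpha !=set0 <-> bil Q v f = 0)) /\
    (forall D, is_chamber Q h V D ->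
       (~ closure D f -> piL D `&` horoball Q h f alpha = set0) /\
       (closure D f -> piL D `&` horoball Q h f alpha =
          rho_preimage Q h f alpha (piL D `&` horosphere Q h f alpha))).
Proof.
move=> [n1 QT _ _ sig] h2 _ VS [c c0 Vc] _ _ _ fcl fL fn f2.
have [phi Hphi] := sig_decomp sig (ltnW n1).
have Hs : sigphi Q phi := Hphi.
have S : Sett Q phi h f V c by split.
exists (2 * c)^-1; first by rewrite invr_gt0 mulr_gt0.
move=> a a0 ale.
have ca : c * a <= 2^-1.
  have -> : (2 : R)^-1 = c * (2 * c)^-1 by field; rewrite gt_eqF.
  by rewrite ler_pM2l.
have rc : forall x, posCone Q h x -> bil Q x f ^+ 2 / bil Q x x <= a ->
    c * bil Q x f ^+ 2 < bil Q x x.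
  move=> x [x2 _]; rewrite ler_pdivrMr // => H.
  have : c * bil Q x f ^+ 2 <= c * (a * bil Q x x) by rewrite ler_pM2l.
  have : c * a * bil Q x x <= 2^-1 * bil Q x x by rewrite ler_pM2r.
  rewrite mulrA; lra.
split.
  move=> v Vv; have [vneg vD] := VS v Vv; split.
    move=> [p [[x [xP xv] <-] [y [yP yr] yE]]].
    have rx : bil Q x f ^+ 2 / bil Q x x <= a by rewrite (ray_ratio Q f yE).
    exact: (wall_lemma QT Hs fn f2 fL vD (Vc v Vv) (proj1 xP) xv (rc x xP rx)).
  move=> vf.
  have vv0 : bil Q v v != 0 by rewrite lt_eqF.
  pose y := h - (bil Q h v / bil Q v v) *: v.
  have yv : bil Q y v = 0.
    by rewrite /y bilDl bilNl bilZl; field.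
  have yy : bil Q y y = bil Q h h - bil Q h v ^+ 2 / bil Q v v.
    rewrite /y !(bilDl, bilDr, bilNl, bilNr, bilZl, bilZr) (bil_sym v h QT).
    by field.
  have yh : bil Q y h = bil Q h h - bil Q h v ^+ 2 / bil Q v v.
    by rewrite /y !(bilDl, bilNl, bilZl) (bil_sym v h QT); field.
  have hv : 0 <= - (bil Q h v ^+ 2 / bil Q v v).
    by rewrite -mulrN; apply: mulr_ge0; [exact: sqr_ge0 | rewrite oppr_ge0 invr_le0 ltW].
  have yP : posCone Q h y by split; [rewrite yy | rewrite yh]; lra.
  have yf := x_f QT Hs h2 fcl fn f2 yP.
  have [fh _] := f_h QT Hs h2 fcl fn f2.
  pose s := bil Q y f / (2 * a).
  have s0 : 0 < s by rewrite divr_gt0 // mulr_gt0.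
  pose x := y + s *: f.
  have xx : bil Q x x = bil Q y y + 2 * s * bil Q y f by rewrite bil_shift.
  have xP : posCone Q h x.
    split; first by rewrite xx; have := mulr_gt0 s0 yf; have := proj1 yP; lra.
    rewrite /x bilDl bilZl; have := mulr_gt0 s0 fh; have := proj2 yP; lra.
  exists (ray x); split.
    exists x => //; split => //.
    by rewrite /x bilDl bilZl yv (bil_sym f v QT) vf mulr0 addr0.
  exists x => //; split => //.
  rewrite /x bil_shift_f // -/x ler_pdivrMr ?(proj1 xP) // xx.
  have -> : 2 * s * bil Q y f = bil Q y f ^+ 2 / a.
    by rewrite /s; field; rewrite gt_eqF.
  rewrite mulrDr mulrCA divff ?gt_eqF // mulr1 lerDr.
  by apply: mulr_ge0; [exact: ltW | exact: ltW (proj1 yP)].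
move=> D [x0 Ox0 ->]; set C := connected_component _ x0.
have [fh _] := f_h QT Hs h2 fcl fn f2.
split.
  move=> nf; apply/seteqP; split => // p [[d [Cd dP] dp] [y [yP yr] yp]].
  exfalso; apply: nf.
  have rd : bil Q d f ^+ 2 / bil Q d d <= a.
    by rewrite (ray_ratio Q f (etrans yp (esym dp))).
  have df := x_f QT Hs h2 fcl fn f2 dP.
  move=> B NB.
  have NB' : nbhs (0 *: d + f) B by rewrite scale0r add0r.
  have ce : {for (0 : R), continuous (fun e : R => e *: d + f)}.
    by apply: cvgD; [exact: scalel_continuous | exact: cvg_cst].
  have [e e0 Be] := nbhs0_pos (ce _ NB').
  exists (e *: d + f); split => //.
  have edP := posCone_scale e0 dP.
  have edf := x_f QT Hs h2 fcl fn f2 edP.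
  have red : bil Q (e *: d) f ^+ 2 / bil Q (e *: d) (e *: d) <= a.
    by rewrite ratio_scale ?gt_eqF.
  have c1 := rc _ edP red.
  have zz : bil Q (e *: d + 1 *: f) (e *: d + 1 *: f) =
     bil Q (e *: d) (e *: d) + 2 * 1 * bil Q (e *: d) f by rewrite bil_shift.
  have zP : posCone Q h (e *: d + 1 *: f).
    split; first by rewrite zz; have := proj1 edP; lra.
    rewrite scale1r bilDl; have := proj2 edP; lra.
  have c2 : c * bil Q (e *: d) f ^+ 2 < bil Q (e *: d + 1 *: f) (e *: d + 1 *: f).
    by rewrite zz; lra.
  have H := move_lemma S (closC_scale e0 Cd) edP zP c1 c2.
  by rewrite scale1r in zP H.
move=> _; apply/seteqP; split.
  move=> p [[d [Cd dP] dp] HBp]; have HBp' := HBp; case: HBp' => [y [yP yr] yp].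
  have rd : bil Q d f ^+ 2 / bil Q d d <= a.
    by rewrite (ray_ratio Q f (etrans yp (esym dp))).
  have df := x_f QT Hs h2 fcl fn f2 dP.
  have d2 := proj1 dP.
  pose u := (bil Q d d - bil Q d f ^+ 2 / a) / (2 * bil Q d f).
  pose z := d + (- u) *: f.
  have zz : bil Q z z = bil Q d f ^+ 2 / a.
    rewrite /z bil_shift // /u; field; by rewrite !gt_eqF.
  have zf : bil Q z f = bil Q d f by rewrite /z bil_shift_f.
  have df2 : 0 < bil Q d f ^+ 2 by rewrite exprn_even_gt0 //= gt_eqF.
  have z2 : 0 < bil Q z z by rewrite zz divr_gt0.
  have zP : posCone Q h z.
    by split => //; apply: (z_h QT Hs h2 fcl fn f2 z2); rewrite zf.
  have c1 := rc d dP rd.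
  have c2 : c * bil Q d f ^+ 2 < bil Q z z.
    rewrite zz ltr_pdivlMr //.
    have : c * a * bil Q d f ^+ 2 <= 2^-1 * bil Q d f ^+ 2 by rewrite ler_pM2r.
    have -> : c * bil Q d f ^+ 2 * a = c * a * bil Q d f ^+ 2 by ring.
    lra.
  have Cz := move_lemma S Cd dP zP c1 c2; rewrite -/z in Cz.
  have rz : bil Q z f ^+ 2 / bil Q z z = a.
    by rewrite zz zf invf_div mulrC divfK // gt_eqF.
  split => //; exists (ray z).
    exists d; first by split => //; rewrite dp.
    split; first by exists z.
    exists z => //; split => //.
    by exists 1 => //; exists (- u) => //; rewrite scale1r.
  split; first by exists z.
  by exists z.
move=> p [HBp [q [x [xP pE] [[w [wP wr] wq] [z [zP [a1 _ [b _ zE]]] qz]]]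
   [[d [Cd dP] dq] _]]].
have rd : bil Q d f ^+ 2 / bil Q d d = a.
  by rewrite (ray_ratio Q f (etrans wq (esym dq))).
have [y [yP yr] yp] := HBp.
have rx : bil Q x f ^+ 2 / bil Q x x <= a.
  by rewrite (ray_ratio Q f (etrans yp pE)).
have [l l0 dE] := ray_eq (etrans qz (esym dq)).
have xf := x_f QT Hs h2 fcl fn f2 xP.
have zf := x_f QT Hs h2 fcl fn f2 zP.
have a10 : 0 < a1.
  move: zf; rewrite -zE bilDl !bilZl f2 mulr0 addr0.
  by rewrite pmulr_lgt0.
pose x' := (l * a1) *: x.
have x'E : d + (- (l * b)) *: f = x'.
  rewrite dE -zE /x' scalerDr !scalerA.
  by rewrite -addrA scaleNr subrr addr0.
have x'P : posCone Q h x' by apply: posCone_scale => //; exact: mulr_gt0.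
have c1 : c * bil Q d f ^+ 2 < bil Q d d by apply: rc => //; rewrite rd.
have dfx : bil Q d f = bil Q x' f by rewrite -x'E bil_shift_f.
have c2 : c * bil Q d f ^+ 2 < bil Q x' x'.
  rewrite dfx; apply: rc => //.
  by rewrite /x' ratio_scale // gt_eqF // mulr_gt0.
have x'P' : posCone Q h (d + (- (l * b)) *: f) by rewrite x'E.
have c2' : c * bil Q d f ^+ 2 <
   bil Q (d + (- (l * b)) *: f) (d + (- (l * b)) *: f) by rewrite x'E.
have H := move_lemma S Cd dP x'P' c1 c2'.
rewrite x'E in H.
split => //; exists x' => //.
by rewrite pE /x' ray_scale // mulr_gt0.
Qed.
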